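(* Let $\pi$ be a probability density on a state space $\Omega$. Let $\{P(\cdot,\cdot;\zeta)\}$ be a family of Markov transition densities indexed by a stochastic sample $\zeta$, where $\zeta$ is drawn from a known fixed distribution, and fix $T\ge1$. Consider the chain that, from state $x$, sets $x_0=x$, and for $t=0,\dots,T-1$ samples $\zeta_t$ independently from that distribution and then $x_{t+1}\sim P(x_t,\cdot\,;\zeta_t)$; it sets $y=x_T$, computes $\tau=\min\left(1,\ \frac{\pi(y)}{\pi(x)}\prod_{t=0}^{T-1}\frac{P(x_{t+1},x_t;\zeta_t)}{P(x_t,x_{t+1};\zeta_t)}\right),$ and moves to $y$ with probability $\tau$, otherwise stays at $x$. Then this chain is reversible with respect to $\pi$, i.e. $\pi(x)G(x,y)=\pi(y)G(y,x)$ for its transition kernel $G$, and in particular has stationary distribution $\pi$. *)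

(* Defs.v *)
From HB Require Import structures.
From mathcomp Require Import all_boot all_order all_algebra.
From mathcomp Require Import all_classical all_reals all_analysis.
Set Implicit Arguments. Unset Strict Implicit. Unset Printing Implicit Defensive.
Import Order.TTheory GRing.Theory Num.Theory.
Local Open Scope ring_scope.
Local Open Scope ereal_scope.

Section MultiStepMH.
Context {R : realType} {d1 d2 : measure_display}
  {Omega : measurableType d1} {Z : measurableType d2}
  (mu : {measure set Omega -> \bar R}) (nu : {measure set Z -> \bar R})
  (P : Omega -> Omega -> Z -> R).

(* path_int n h cur r : expectation over the remaining n steps of the chain
   (zeta_t ~ nu, then x_{t+1} ~ P(x_t, . ; zeta_t) w.r.t. mu) of h(x_n, r'),
   where r' is r multiplied by the ratios P(x_{t+1},x_t;zeta_t)/P(x_t,x_{t+1};zeta_t). *)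
Fixpoint path_int (n : nat) (h : Omega -> R -> \bar R) (cur : Omega) (r : R)
  : \bar R :=
  match n with
  | 0%N => h cur r
  | n'.+1 => \int[nu]_z \int[mu]_y
       ((P cur y z)%:E * path_int n' h y (r * (P y cur z / P cur y z))%R)
  end.

Definition mh_tau (pi : Omega -> R) (x y : Omega) (r : R) : R :=
  Num.min 1%R (pi y / pi x * r)%R.

Definition mh_kernel (pi : Omega -> R) (T : nat) (x : Omega) (B : set Omega)
  : \bar R :=
  path_int T (fun y r => (mh_tau pi x y r * \1_B y
                          + (1 - mh_tau pi x y r) * \1_B x)%R%:E) x 1%R.

End MultiStepMH.

(* Main.v *)
Require Import Defs.
From HB Require Import structures.
From mathcomp Require Import all_boot all_order all_algebra.
From mathcomp Require Import all_classical all_reals all_analysis.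
From mathcomp Require Import measurable_realfun.
From mathcomp Require Import ring.
Import Order.TTheory GRing.Theory Num.Theory.
Local Open Scope ring_scope.
Local Open Scope classical_set_scope.
Lemma minv (R : realType) : measurable_fun setT (@GRing.inv R).
Proof.
have -> : [set: R] = [set 0%R] `|` [set r | r != 0%R].
  apply/seteqP; split => x //= _; case: (eqVneq x 0) => [->|h]; [left|right] => //.
have mo : measurable [set r : R | r != 0%R].
  have -> : [set r : R | r != 0%R] = ~` [set 0%R].
    by apply/seteqP; split => x /=; [move/eqP|move/eqP].
  exact: measurableC.
apply/measurable_funU => //.
split.
- apply: (@eq_measurable_fun _ _ _ _ _ (cst (0:R))); last exact: measurable_cst.
  by move=> x; rewrite inE /= => ->; rewrite invr0.
- apply: open_continuous_measurable_fun; first exact: open_neq.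
  by move=> x; rewrite inE /= => x0; apply: inv_continuous.
Qed.


Lemma key (R : realType) (p q a b : R) : 0 <= p -> 0 <= q -> 0 <= a -> 0 <= b ->
  p * b * Num.min 1 (q / p * Num.max (a / b) 0) = q * a * Num.min 1 (p / q * Num.max (b / a) 0).
Proof.
move=> p0 q0 a0 b0.
rewrite !max_l ?divr_ge0 //.
suff H : forall p q a b : R, 0 <= p -> 0 <= q -> 0 <= a -> 0 <= b ->
    p * b * Num.min 1 (q / p * (a / b)) = Num.min (p * b) (q * a).
  by rewrite H // H // minC.
move=> {}p {}q {}a {}b {}p0 {}q0 {}a0 {}b0.
rewrite minr_pMr ?mulr_ge0 // mulr1.
have [pb0|pb0] := eqVneq (p * b) 0.
  by rewrite pb0 mul0r minxx min_l // mulr_ge0.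
congr Num.min.
move: pb0; rewrite mulf_eq0 negb_or => /andP[pn bn].
by rewrite mulrACA (mulrCA p) (mulrCA b) !mulfV // !mulr1.
Qed.

Local Open Scope ereal_scope.
Definition mkSF (R : realType) (d : measure_display) (T : measurableType d)
  (m : {measure set T -> \bar R}) (h : sigma_finite setT m) : {sigma_finite_measure set T -> \bar R} :=
 @SigmaFiniteMeasure.Pack d T R m (@SigmaFiniteMeasure.Class d T R m _
   (Measure.measure_function_Content_isMeasure_mixin (Measure.class m))
   (isSFinite.Axioms_ _ _ _ (sfinite_measure_sigma_finite h)) (isSigmaFinite.Axioms_ _ _ _ h)).

Ltac mprod := repeat first [ apply: measurable_fun_pair | exact: measurable_fst | exact: measurable_snd | exact: measurable_id | apply: (measurableT_comp measurable_fst) | apply: (measurableT_comp measurable_snd) | apply: measurable_funM | exact: measurable_cst].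

Section S.
Context (R : realType) (d1 d2 : measure_display)
  (Omega : measurableType d1) (Z : measurableType d2)
  (mu : {sigma_finite_measure set Omega -> \bar R})
  (nu : {sigma_finite_measure set Z -> \bar R})
  (P : Omega -> Omega -> Z -> R).
Hypothesis mP : measurable_fun setT (fun p : Omega * Omega * Z => P p.1.1 p.1.2 p.2).
Hypothesis P0 : forall x y z, (0 <= P x y z)%R.

Lemma mP_comp d (T : measurableType d) (f1 f2 : T -> Omega) (f3 : T -> Z) :
  measurable_fun setT f1 -> measurable_fun setT f2 -> measurable_fun setT f3 ->
  measurable_fun setT (fun w => P (f1 w) (f2 w) (f3 w)).
Proof.
move=> m1 m2 m3.
exact: (measurableT_comp mP (measurable_fun_pair (measurable_fun_pair m1 m2) m3)).
Qed.

Fixpoint Q (n : nat) (g : Omega -> R -> R -> \bar R) (x : Omega) (a b : R) : \bar R :=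
  match n with
  | 0%N => g x a b
  | n'.+1 => \int[nu]_z \int[mu]_y Q n' g y (a * P x y z)%R (b * P y x z)%R
  end.

Definition mQ {d} {U : measurableType d} (H : U -> Omega -> R -> R -> \bar R) :=
  measurable_fun setT (fun p : U * Omega * R * R => H p.1.1.1 p.1.1.2 p.1.2 p.2).

Lemma Q_ge0 n g : (forall y a b, 0 <= g y a b) -> forall x a b, 0 <= Q n g x a b.
Proof.
move=> g0; elim: n => [|n IH] x a b //=.
by apply: integral_ge0 => z _; apply: integral_ge0 => y _.
Qed.

Lemma Q_meas n {d} {U : measurableType d} {H : U -> Omega -> R -> R -> \bar R} :
  mQ H -> (forall u y a b, 0 <= H u y a b) -> mQ (fun u => Q n (H u)).
Proof.
move=> mH H0; elim: n => [|n IH] //=.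
have m1 : measurable_fun setT (fun q : (U * Omega * R * R) * Z =>
   \int[mu]_y Q n (H q.1.1.1.1) y (q.1.1.2 * P q.1.1.1.2 y q.2)%R (q.1.2 * P y q.1.1.1.2 q.2)%R).
  have := measurable_fun_fubini_tonelli_F (m2:=mu)
    (fun w : ((U * Omega * R * R) * Z) * Omega => Q n (H w.1.1.1.1.1) w.2
       (w.1.1.1.2 * P w.1.1.1.1.2 w.2 w.1.2)%R (w.1.1.2 * P w.2 w.1.1.1.1.2 w.1.2)%R).
  apply.
  - pose g := fun w : ((U * Omega * R * R) * Z) * Omega => (((w.1.1.1.1.1, w.2),
       (w.1.1.1.2 * P w.1.1.1.1.2 w.2 w.1.2)%R), (w.1.1.2 * P w.2 w.1.1.1.1.2 w.1.2)%R).
    have mg : measurable_fun setT g.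
      rewrite /g; mprod; apply: mP_comp; mprod.
    exact: (measurableT_comp IH mg).
  - by move=> w; apply: Q_ge0.
have := measurable_fun_fubini_tonelli_F (m2:=nu)
    (fun w : (U * Omega * R * R) * Z => 
   \int[mu]_y Q n (H w.1.1.1.1) y (w.1.1.2 * P w.1.1.1.2 y w.2)%R (w.1.2 * P y w.1.1.1.2 w.2)%R).
apply => // w; apply: integral_ge0 => y _; exact: Q_ge0.
Qed.

Lemma Q_scale n g : forall x c e a b,
  Q n g x (c * a)%R (e * b)%R = Q n (fun y a' b' => g y (c * a')%R (e * b')%R) x a b.
Proof.
elim: n => [|n IH] x c e a b //=.
apply: eq_integral => z _; apply: eq_integral => y _.
by rewrite -!mulrA IH.
Qed.

Lemma Q_scale1 n g x c e :
  Q n g x c e = Q n (fun y a' b' => g y (c * a')%R (e * b')%R) x 1 1.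
Proof. by rewrite -Q_scale !mulr1. Qed.

Definition step (g : Omega -> R -> R -> \bar R) y a b :=
  \int[nu]_z \int[mu]_w g w (a * P y w z)%R (b * P w y z)%R.

Lemma Q_snoc n g : forall x a b, Q n.+1 g x a b = Q n (step g) x a b.
Proof.
elim: n => [|n IH] x a b //=.
apply: eq_integral => z _; apply: eq_integral => y _.
by rewrite -IH.
Qed.

Lemma mQ_comp {d} {U : measurableType d} {H : U -> Omega -> R -> R -> \bar R} (mH : mQ H) {d'} {V : measurableType d'}
  (fu : V -> U) (fx : V -> Omega) (fa fb : V -> R) :
  measurable_fun setT fu -> measurable_fun setT fx ->
  measurable_fun setT fa -> measurable_fun setT fb ->
  measurable_fun setT (fun v => H (fu v) (fx v) (fa v) (fb v)).
Proof.
move=> m1 m2 m3 m4.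
exact: (measurableT_comp mH (measurable_fun_pair (measurable_fun_pair (measurable_fun_pair m1 m2) m3) m4)).
Qed.

Lemma mint {d} {d'} {X : measurableType d} {Y : measurableType d'}
  (m2 : {sigma_finite_measure set Y -> \bar R}) (f : X -> Y -> \bar R) :
  measurable_fun setT (fun p => f p.1 p.2) -> (forall x y, 0 <= f x y) ->
  measurable_fun setT (fun x => \int[m2]_y f x y).
Proof.
move=> mf f0.
exact: (measurable_fun_fubini_tonelli_F (m2:=m2) (fun p => f p.1 p.2) mf (fun p => f0 _ _)).
Qed.

Lemma swap {d} {d'} {X : measurableType d} {Y : measurableType d'}
  (m1 : {sigma_finite_measure set X -> \bar R})
  (m2 : {sigma_finite_measure set Y -> \bar R}) (f : X -> Y -> \bar R) :
  measurable_fun setT (fun p => f p.1 p.2) -> (forall x y, 0 <= f x y) ->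
  \int[m1]_x \int[m2]_y f x y = \int[m2]_y \int[m1]_x f x y.
Proof.
move=> mf f0.
exact: (fubini_tonelli (m1:=m1) (m2:=m2) (fun p => f p.1 p.2) mf (fun p => f0 _ _)).
Qed.

Lemma Q_comm n {d} {U : measurableType d} (m : {sigma_finite_measure set U -> \bar R})
  (H : U -> Omega -> R -> R -> \bar R) :
  mQ H -> (forall u y a b, 0 <= H u y a b) ->
  forall x a b, \int[m]_u Q n (H u) x a b = Q n (fun y a b => \int[m]_u H u y a b) x a b.
Proof.
move=> mH H0; have mQH := Q_meas n mH H0.
elim: n mQH => [|n IH] mQH x a b //=.
have mQn := Q_meas n mH H0.
rewrite (swap m nu (fun u z => \int[mu]_y Q n (H u) y (a * P x y z)%R (b * P y x z)%R)); last first.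
- by move=> u z; apply: integral_ge0 => y _; apply: Q_ge0.
- apply: (mint mu (fun (p : U * Z) y => Q n (H p.1) y (a * P x y p.2)%R (b * P y x p.2)%R)); last first.
    by move=> p y; apply: Q_ge0.
  apply: (mQ_comp (H := fun u => Q n (H u)) mQn); mprod; apply: mP_comp; mprod.
apply: eq_integral => z _.
rewrite (swap m mu (fun u y => Q n (H u) y (a * P x y z)%R (b * P y x z)%R)); last first.
- by move=> u y; apply: Q_ge0.
- apply: (mQ_comp (H := fun u => Q n (H u)) mQn); mprod; apply: mP_comp; mprod.
apply: eq_integral => y _.
exact: IH.
Qed.

Lemma Q_rev n : forall g : Omega -> Omega -> R -> R -> \bar R, mQ g ->
  (forall x y a b, 0 <= g x y a b) ->
  \int[mu]_x Q n (g x) x 1 1 = \int[mu]_y Q n (fun x a b => g x y b a) y 1 1.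
Proof.
elim: n => [|n IH] g mg g0; first by [].
have mQg := Q_meas n mg g0.
transitivity (\int[nu]_z \int[mu]_y \int[mu]_x Q n (g x) y (1 * P x y z)%R (1 * P y x z)%R).
  rewrite /=.
  rewrite (swap mu nu (fun x z => \int[mu]_y Q n (g x) y (1 * P x y z)%R (1 * P y x z)%R)); last first.
  - by move=> x z; apply: integral_ge0 => y _; apply: Q_ge0 => *; apply: g0.
  - apply: (mint mu (fun (p : Omega * Z) y => Q n (g p.1) y (1 * P p.1 y p.2)%R (1 * P y p.1 p.2)%R)); last first.
      by move=> p y; apply: Q_ge0 => *; apply: g0.
    apply: (mQ_comp (H := fun u => Q n (g u)) mQg); mprod; apply: mP_comp; mprod.
  apply: eq_integral => z _.
  rewrite (swap mu mu (fun x y => Q n (g x) y (1 * P x y z)%R (1 * P y x z)%R)) //.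
  - apply: (mQ_comp (H := fun u => Q n (g u)) mQg); mprod; apply: mP_comp; mprod.
  - by move=> x y; apply: Q_ge0 => *; apply: g0.
transitivity (\int[nu]_z \int[mu]_y Q n (fun w a b => \int[mu]_x g x w (P x y z * a)%R (P y x z * b)%R) y 1 1).
  apply: eq_integral => z _; apply: eq_integral => y _.
  under eq_integral => x _ do rewrite !mul1r Q_scale1.
  apply: (Q_comm n mu (fun x w a b => g x w (P x y z * a)%R (P y x z * b)%R)).
  - rewrite /mQ; apply: (mQ_comp (H := g) mg); mprod; apply: mP_comp; mprod.
  - by move=> *; apply: g0.
transitivity (\int[nu]_z \int[mu]_w Q n (fun y a b => \int[mu]_x g x w (P x y z * b)%R (P y x z * a)%R) w 1 1).
  apply: eq_integral => z _.
  apply: (IH (fun y w a b => \int[mu]_x g x w (P x y z * a)%R (P y x z * b)%R)).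
  - rewrite /mQ.
    apply: (mint mu (fun (p : Omega * Omega * R * R) x => g x p.1.1.2 (P x p.1.1.1 z * p.1.2)%R (P p.1.1.1 x z * p.2)%R)); last first.
      by move=> *; apply: g0.
    apply: (mQ_comp (H := g) mg); mprod; apply: mP_comp; mprod.
  - by move=> *; apply: integral_ge0 => x _; apply: g0.
have mH1 : mQ (fun (u : Z * Omega) y a b => \int[mu]_x g x u.2 (P x y u.1 * b)%R (P y x u.1 * a)%R).
  rewrite /mQ.
  apply: (mint mu (fun (p : Z * Omega * Omega * R * R) x => g x p.1.1.1.2 (P x p.1.1.2 p.1.1.1.1 * p.2)%R (P p.1.1.2 x p.1.1.1.1 * p.1.2)%R)); last first.
    by move=> *; apply: g0.
  apply: (mQ_comp (H := g) mg); mprod; apply: mP_comp; mprod.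
have H10 : forall (u : Z * Omega) y a b, 0 <= \int[mu]_x g x u.2 (P x y u.1 * b)%R (P y x u.1 * a)%R.
  by move=> *; apply: integral_ge0 => x _; apply: g0.
have mQ1 := Q_meas n mH1 H10.
transitivity (\int[mu]_w \int[nu]_z Q n (fun y a b => \int[mu]_x g x w (P x y z * b)%R (P y x z * a)%R) w 1 1).
  apply: (swap nu mu (fun z w => Q n (fun y a b => \int[mu]_x g x w (P x y z * b)%R (P y x z * a)%R) w 1 1)).
  - apply: (mQ_comp (H := fun u => Q n (fun y a b => \int[mu]_x g x u.2 (P x y u.1 * b)%R (P y x u.1 * a)%R)) mQ1); mprod.
  - by move=> z w; apply: Q_ge0 => *; apply: integral_ge0 => x _; apply: g0.
apply: eq_integral => w _.
rewrite (Q_comm n nu (fun z y a b => \int[mu]_x g x w (P x y z * b)%R (P y x z * a)%R)); last 2 first.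
- rewrite /mQ.
  apply: (mint mu (fun (p : Z * Omega * R * R) x => g x w (P x p.1.1.2 p.1.1.1 * p.2)%R (P p.1.1.2 x p.1.1.1 * p.1.2)%R)); last first.
    by move=> *; apply: g0.
  apply: (mQ_comp (H := g) mg); mprod; apply: mP_comp; mprod.
- by move=> *; apply: integral_ge0 => x _; apply: g0.
rewrite Q_snoc /step.
congr (Q n _ w 1 1); apply/funext => y; apply/funext => a; apply/funext => b.
apply: eq_integral => z _; apply: eq_integral => x _.
by rewrite (mulrC (P x y z)) (mulrC (P y x z)).
Qed.

Definition mg0 (g : Omega -> R -> R -> \bar R) :=
  measurable_fun setT (fun p : Omega * R * R => g p.1.1 p.1.2 p.2).

Lemma mg0_comp {g : Omega -> R -> R -> \bar R} (mg : mg0 g) {d'} {V : measurableType d'}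
  (fx : V -> Omega) (fa fb : V -> R) :
  measurable_fun setT fx -> measurable_fun setT fa -> measurable_fun setT fb ->
  measurable_fun setT (fun v => g (fx v) (fa v) (fb v)).
Proof.
move=> m2 m3 m4.
exact: (measurableT_comp mg (measurable_fun_pair (measurable_fun_pair m2 m3) m4)).
Qed.

Lemma Q_meas0 n g : mg0 g -> (forall y a b, 0 <= g y a b) -> mg0 (Q n g).
Proof.
move=> mg g0.
have mH : mQ (fun _ : Omega => g).
  by rewrite /mQ; apply: (mg0_comp (g:=g) mg); mprod.
have mQ' := Q_meas n mH (fun _ => g0).
rewrite /mg0; apply: (mQ_comp (H := fun _ : Omega => Q n g) mQ' (fun p : Omega * R * R => p.1.1)); mprod.
Qed.

Lemma Q_zw n g : (forall y b, g y 0%R b = 0) -> forall x b, Q n g x 0%R b = 0.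
Proof.
move=> g0; elim: n => [|n IH] x b /=; first exact: g0.
apply: integral0_eq => z _; apply: integral0_eq => y _.
by rewrite mul0r IH.
Qed.

Lemma Q_cst0 n : forall x a b, Q n (fun _ _ _ => 0) x a b = 0.
Proof.
elim: n => [|n IH] x a b //=.
apply: integral0_eq => z _; apply: integral0_eq => y _.
by rewrite IH.
Qed.

Lemma Q_ext n g1 g2 : (forall y a b, (0 <= a)%R -> (0 <= b)%R -> g1 y a b = g2 y a b) ->
  forall x a b, (0 <= a)%R -> (0 <= b)%R -> Q n g1 x a b = Q n g2 x a b.
Proof.
move=> g12; elim: n => [|n IH] x a b a0 b0 /=; first exact: g12.
apply: eq_integral => z _; apply: eq_integral => y _.
by apply: IH; apply: mulr_ge0.
Qed.

Lemma QZ n g (c : R) : mg0 g -> (forall y a b, 0 <= g y a b) -> (0 <= c)%R ->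
  forall x a b, Q n (fun y a b => c%:E * g y a b) x a b = c%:E * Q n g x a b.
Proof.
move=> mg g0 c0; have mQn := Q_meas0 n g mg g0.
elim: n mQn => [|n IH] mQn x a b //=.
have mQn' := Q_meas0 n g mg g0.
transitivity (\int[nu]_z \int[mu]_y (c%:E * Q n g y (a * P x y z)%R (b * P y x z)%R)).
  by apply: eq_integral => z _; apply: eq_integral => y _; rewrite IH.
transitivity (\int[nu]_z (c%:E * \int[mu]_y Q n g y (a * P x y z)%R (b * P y x z)%R)).
  apply: eq_integral => z _.
  apply: (ge0_integralZl_EFin _ measurableT (f1 := fun y => Q n g y (a * P x y z)%R (b * P y x z)%R)) => //.
  - by move=> y _; apply: Q_ge0.
  - apply: (mg0_comp mQn'); mprod; apply: mP_comp; mprod.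
apply: (ge0_integralZl_EFin _ measurableT (f1 := fun z => \int[mu]_y Q n g y (a * P x y z)%R (b * P y x z)%R)) => //.
- by move=> z _; apply: integral_ge0 => y _; apply: Q_ge0.
- apply: (mint mu (fun z y => Q n g y (a * P x y z)%R (b * P y x z)%R)).
    apply: (mg0_comp mQn'); mprod; apply: mP_comp; mprod.
  by move=> *; apply: Q_ge0.
Qed.

Lemma QD n g1 g2 : mg0 g1 -> (forall y a b, 0 <= g1 y a b) ->
  mg0 g2 -> (forall y a b, 0 <= g2 y a b) ->
  forall x a b, Q n (fun y a b => g1 y a b + g2 y a b) x a b = Q n g1 x a b + Q n g2 x a b.
Proof.
move=> mg1 g10 mg2 g20.
elim: n => [|n IH] x a b //=.
have m1 := Q_meas0 n g1 mg1 g10; have m2 := Q_meas0 n g2 mg2 g20.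
transitivity (\int[nu]_z \int[mu]_y (Q n g1 y (a * P x y z)%R (b * P y x z)%R + Q n g2 y (a * P x y z)%R (b * P y x z)%R)).
  by apply: eq_integral => z _; apply: eq_integral => y _; rewrite IH.
transitivity (\int[nu]_z (\int[mu]_y Q n g1 y (a * P x y z)%R (b * P y x z)%R + \int[mu]_y Q n g2 y (a * P x y z)%R (b * P y x z)%R)).
  apply: eq_integral => z _.
  apply: (ge0_integralD _ measurableT (f1 := fun y => Q n g1 y (a * P x y z)%R (b * P y x z)%R) (f2 := fun y => Q n g2 y (a * P x y z)%R (b * P y x z)%R)).
  - by move=> y _; apply: Q_ge0.
  - apply: (mg0_comp m1); mprod; apply: mP_comp; mprod.
  - by move=> y _; apply: Q_ge0.
  - apply: (mg0_comp m2); mprod; apply: mP_comp; mprod.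
apply: (ge0_integralD _ measurableT (f1 := fun z => \int[mu]_y Q n g1 y (a * P x y z)%R (b * P y x z)%R) (f2 := fun z => \int[mu]_y Q n g2 y (a * P x y z)%R (b * P y x z)%R)).
- by move=> z _; apply: integral_ge0 => y _; apply: Q_ge0.
- apply: (mint mu (fun z y => Q n g1 y (a * P x y z)%R (b * P y x z)%R)).
    apply: (mg0_comp m1); mprod; apply: mP_comp; mprod.
  by move=> *; apply: Q_ge0.
- by move=> z _; apply: integral_ge0 => y _; apply: Q_ge0.
- apply: (mint mu (fun z y => Q n g2 y (a * P x y z)%R (b * P y x z)%R)).
    apply: (mg0_comp m2); mprod; apply: mP_comp; mprod.
  by move=> *; apply: Q_ge0.
Qed.

Ltac mp := repeat first [ apply: measurable_fun_pair | exact: measurable_fst | exact: measurable_snd | exact: measurable_id | apply: (measurableT_comp measurable_fst) | apply: (measurableT_comp measurable_snd) | apply: measurable_funM | exact: measurable_cst | apply: mP_comp | apply: (measurableT_comp (minv _)) | apply: measurable_maxr | apply: measurable_minr | apply: (measurableT_comp (@normr_measurable _ setT)) ].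

Definition Gof (h : Omega -> R -> \bar R) (y : Omega) (a b : R) : \bar R :=
  (`|a|)%:E * h y (Num.max (b / a) 0)%R.

Lemma Gof_meas h : measurable_fun setT (fun p : Omega * R => h p.1 p.2) -> mg0 (Gof h).
Proof.
move=> mh; rewrite /mg0 /Gof.
apply: emeasurable_funM.
  apply/measurable_EFinP.
  exact: (measurableT_comp (@normr_measurable _ setT) (measurableT_comp measurable_snd measurable_fst)).
pose f1 := fun p : Omega * R * R => p.1.1.
pose f2 := fun p : Omega * R * R => Num.max (p.2 / p.1.2)%R 0%R.
have m1 : measurable_fun setT f1 by rewrite /f1; mp.
have m2 : measurable_fun setT f2.
  rewrite /f2; apply: measurable_maxr; last exact: measurable_cst.
  apply: measurable_funM; first exact: measurable_snd.
  apply: (measurableT_comp (minv _)); exact: (measurableT_comp measurable_snd measurable_fst).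
exact: (measurableT_comp mh (measurable_fun_pair m1 m2)).
Qed.

Lemma Gof_ge0 h : (forall y r, (0 <= r)%R -> 0 <= h y r) -> forall y a b, 0 <= Gof h y a b.
Proof.
move=> h0 y a b; rewrite /Gof; apply: mule_ge0; first by rewrite lee_fin.
by apply: h0; rewrite le_max lexx orbT.
Qed.

Lemma Q_pi n (h : Omega -> R -> \bar R) :
  measurable_fun setT (fun p : Omega * R => h p.1 p.2) ->
  (forall y r, (0 <= r)%R -> 0 <= h y r) ->
  forall x a b, (0 < a)%R -> (0 <= b)%R ->
  Q n (Gof h) x a b = a%:E * path_int mu nu P n h x (b / a)%R.
Proof.
move=> mh h0.
have mG := Gof_meas h mh; have G0 := Gof_ge0 h h0.
have mQn := Q_meas0 n (Gof h) mG G0.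
elim: n mQn => [|n IH] mQn x a b a0 b0.
  by rewrite /= /Gof gtr0_norm // max_l // divr_ge0 // ltW.
have mQn' := Q_meas0 n (Gof h) mG G0.
move: (IH mQn') => {}IH.
have IH1 : forall y s, (0 <= s)%R -> path_int mu nu P n h y s = Q n (Gof h) y 1 s.
  by move=> y s s0; rewrite IH ?ltr01 // ?mul1e ?divr1 //.
have mf : forall z, measurable_fun setT (fun y => (P x y z)%:E * Q n (Gof h) y 1 (b / a * (P y x z / P x y z))%R).
  move=> z; apply: emeasurable_funM.
    apply/measurable_EFinP; mp.
  apply: (mg0_comp mQn'); mp.
have f0 : forall z y, 0 <= (P x y z)%:E * Q n (Gof h) y 1 (b / a * (P y x z / P x y z))%R.
  by move=> z y; apply: mule_ge0; [rewrite lee_fin|apply: Q_ge0].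
transitivity (\int[nu]_z \int[mu]_y (a%:E * ((P x y z)%:E * Q n (Gof h) y 1 (b / a * (P y x z / P x y z))%R))).
  rewrite /=; apply: eq_integral => z _; apply: eq_integral => y _.
  have := P0 x y z; rewrite le_eqVlt => /orP [/eqP Pe | Pp].
    rewrite -Pe mulr0 Q_zw ?mul0e ?mule0 //.
    by move=> w c; rewrite /Gof normr0 mul0e.
  rewrite IH ?mulr_gt0 ?mulr_ge0 //.
  rewrite -IH1; last by rewrite mulr_ge0 ?divr_ge0 // ltW.
  rewrite EFinM -muleA; congr (_ * (_ * path_int _ _ _ _ _ _ _)).
  by rewrite invfM mulrACA.
transitivity (a%:E * \int[nu]_z \int[mu]_y ((P x y z)%:E * Q n (Gof h) y 1 (b / a * (P y x z / P x y z))%R)).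
  transitivity (\int[nu]_z (a%:E * \int[mu]_y ((P x y z)%:E * Q n (Gof h) y 1 (b / a * (P y x z / P x y z))%R))).
    apply: eq_integral => z _.
    apply: (ge0_integralZl_EFin _ measurableT (f1 := fun y => (P x y z)%:E * Q n (Gof h) y 1 (b / a * (P y x z / P x y z))%R)) => //.
    all: try exact: ltW; try (by move=> ? _; apply: f0); try exact: mf.
  apply: (ge0_integralZl_EFin _ measurableT (f1 := fun z => \int[mu]_y ((P x y z)%:E * Q n (Gof h) y 1 (b / a * (P y x z / P x y z))%R))) => //.
  all: try exact: ltW; try (by move=> z _; apply: integral_ge0 => y _; apply: f0).
  apply: (mint mu (fun z y => (P x y z)%:E * Q n (Gof h) y 1 (b / a * (P y x z / P x y z))%R)) => //.
    apply: emeasurable_funM.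
      apply/measurable_EFinP; mp.
    apply: (mg0_comp mQn'); mp.
rewrite /=; congr (_ * _); apply: eq_integral => z _; apply: eq_integral => y _.
by rewrite IH1 // mulr_ge0 ?divr_ge0 // ltW.
Qed.

Variable pi : Omega -> R.
Hypothesis mpi : measurable_fun setT pi.
Hypothesis pi0 : forall x, (0 <= pi x)%R.

Lemma mtau0 : measurable_fun setT (fun p : Omega * Omega * R => mh_tau pi p.1.1 p.1.2 p.2).
Proof.
rewrite /mh_tau; apply: measurable_minr; first exact: measurable_cst.
apply: measurable_funM; last exact: measurable_snd.
apply: measurable_funM.
  exact: (measurableT_comp mpi (measurableT_comp measurable_snd measurable_fst)).
exact: (measurableT_comp (minv _) (measurableT_comp mpi (measurableT_comp measurable_fst measurable_fst))).
Qed.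

Lemma tau_01 x y r : (0 <= r)%R -> (0 <= mh_tau pi x y r <= 1)%R.
Proof.
move=> r0; rewrite /mh_tau ge_min lexx orTb andbT le_min ler01 /=.
by rewrite !mulr_ge0 ?invr_ge0.
Qed.

Definition tau' x y (a b : R) := mh_tau pi x y (Num.max (b / a) 0)%R.

Lemma tau'_01 x y a b : (0 <= tau' x y a b <= 1)%R.
Proof. by apply: tau_01; rewrite le_max lexx orbT. Qed.

Lemma mtau' : measurable_fun setT (fun p : Omega * Omega * R * R => tau' p.1.1.1 p.1.1.2 p.1.2 p.2).
Proof.
rewrite /tau'.
pose f := fun p : Omega * Omega * R * R => (p.1.1.1, p.1.1.2, Num.max (p.2 / p.1.2)%R 0%R).
have mf : measurable_fun setT f.
  rewrite /f; apply: measurable_fun_pair; first mp.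
  apply: measurable_maxr; last exact: measurable_cst.
  apply: measurable_funM; first exact: measurable_snd.
  apply: (measurableT_comp (minv _)); exact: (measurableT_comp measurable_snd measurable_fst).
exact: (measurableT_comp mtau0 mf).
Qed.

Definition acc (B : set Omega) x y a b := (`|a| * tau' x y a b * \1_B y)%R%:E.
Definition rej1 x y (a b : R) := (`|a| * (1 - tau' x y a b))%R%:E.

Lemma mind {B : set Omega} (mB : measurable B) {d'} {V : measurableType d'} (f : V -> Omega) :
  measurable_fun setT f -> measurable_fun setT (fun v => (\1_B (f v) : R)).
Proof. by move=> mf; exact: (measurableT_comp (@measurable_indic _ _ R setT B mB) mf). Qed.

Lemma mtau'_comp {d'} {V : measurableType d'} (f1 f2 : V -> Omega) (f3 f4 : V -> R) :
  measurable_fun setT f1 -> measurable_fun setT f2 -> measurable_fun setT f3 -> measurable_fun setT f4 ->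
  measurable_fun setT (fun v => tau' (f1 v) (f2 v) (f3 v) (f4 v)).
Proof.
move=> m1 m2 m3 m4.
exact: (measurableT_comp mtau' (measurable_fun_pair (measurable_fun_pair (measurable_fun_pair m1 m2) m3) m4)).
Qed.

Lemma macc_fam A B : measurable A -> measurable B ->
  mQ (fun x y a b => (\1_A x * pi x)%R%:E * acc B x y a b).
Proof.
move=> mA mB; rewrite /mQ /acc.
apply: emeasurable_funM; apply/measurable_EFinP.
  apply: measurable_funM.
    by apply: (mind mA); mp.
  exact: (measurableT_comp mpi (measurableT_comp measurable_fst (measurableT_comp measurable_fst measurable_fst))).
apply: measurable_funM; last by apply: (mind mB); mp.
apply: measurable_funM.
  exact: (measurableT_comp (@normr_measurable _ setT) (measurableT_comp measurable_snd measurable_fst)).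
by apply: mtau'_comp; mp.
Qed.

Lemma mrej_fam : mQ rej1.
Proof.
rewrite /mQ /rej1; apply/measurable_EFinP.
apply: measurable_funM.
  exact: (measurableT_comp (@normr_measurable _ setT) (measurableT_comp measurable_snd measurable_fst)).
apply: measurable_funB; first exact: measurable_cst.
by apply: mtau'_comp; mp.
Qed.

Lemma acc_ge0 B x y a b : 0 <= acc B x y a b.
Proof.
case/andP: (tau'_01 x y a b) => t0 _.
by rewrite /acc lee_fin !mulr_ge0 // indicE.
Qed.

Lemma rej1_ge0 x y a b : 0 <= rej1 x y a b.
Proof.
case/andP: (tau'_01 x y a b) => _ t1.
by rewrite /rej1 lee_fin !mulr_ge0 // subr_ge0.
Qed.

Definition hB (B : set Omega) x := fun y r =>
  (mh_tau pi x y r * \1_B y + (1 - mh_tau pi x y r) * \1_B x)%R%:E.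

Lemma mhB B x : measurable B -> measurable_fun setT (fun p : Omega * R => hB B x p.1 p.2).
Proof.
move=> mB; rewrite /hB; apply/measurable_EFinP.
have mt : measurable_fun setT (fun p : Omega * R => mh_tau pi x p.1 p.2).
  exact: (measurableT_comp mtau0 (measurable_fun_pair (measurable_fun_pair (measurable_cst x) measurable_fst) measurable_snd)).
apply: measurable_funD; apply: measurable_funM => //.
all: try (by apply: (mind mB); mp); try (by apply: measurable_funB => //; exact: measurable_cst); try exact: measurable_cst.
Qed.

Lemma hB_ge0 B x y r : (0 <= r)%R -> 0 <= hB B x y r.
Proof.
move=> r0; rewrite /hB lee_fin; case/andP: (tau_01 x y r r0) => t0 t1.
by rewrite addr_ge0 // mulr_ge0 // ?subr_ge0 // indicE.
Qed.

Lemma K_eq n B x : measurable B ->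
  mh_kernel mu nu P pi n x B = Q n (acc B x) x 1 1 + (\1_B x)%:E * Q n (rej1 x) x 1 1.
Proof.
move=> mB.
have := Q_pi n (hB B x) (mhB B x mB) (@hB_ge0 B x) x 1%R 1%R ltr01 ler01.
rewrite mul1e divr1 /mh_kernel => <-.
have mrej : mg0 (rej1 x).
  rewrite /mg0; apply: (mQ_comp (H := rej1) mrej_fam (fun p : Omega * R * R => x)); mp.
have macc : mg0 (acc B x).
  rewrite /mg0 /acc; apply/measurable_EFinP.
  apply: measurable_funM; last by apply: (mind mB); mp.
  apply: measurable_funM.
    exact: (measurableT_comp (@normr_measurable _ setT) (measurableT_comp measurable_snd measurable_fst)).
  by apply: mtau'_comp; mp.
have c0 : (0 <= \1_B x :> R)%R by rewrite indicE.
rewrite -(QZ n (rej1 x) (\1_B x) mrej (@rej1_ge0 x) c0).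
have mrej' : mg0 (fun y a b => (\1_B x)%:E * rej1 x y a b).
  rewrite /mg0; apply: emeasurable_funM; first exact: measurable_cst.
  exact: mrej.
have rej0' : forall y a b, 0 <= (\1_B x)%:E * rej1 x y a b.
  by move=> *; apply: mule_ge0; [rewrite lee_fin|apply: rej1_ge0].
rewrite -(QD n (acc B x) _ macc (@acc_ge0 B x) mrej' rej0').
congr (Q n _ x 1 1); apply/funext => y; apply/funext => a; apply/funext => b.
rewrite /Gof /hB /acc /rej1 /tau' -!EFinM -EFinD; congr EFin.
ring.
Qed.

Lemma macc B x : measurable B -> mg0 (acc B x).
Proof.
move=> mB; rewrite /mg0 /acc; apply/measurable_EFinP.
apply: measurable_funM; last by apply: (mind mB); mp.
apply: measurable_funM.
  exact: (measurableT_comp (@normr_measurable _ setT) (measurableT_comp measurable_snd measurable_fst)).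
by apply: mtau'_comp; mp.
Qed.

Lemma gH0 A B : forall x y a b, 0 <= (\1_A x * pi x)%R%:E * acc B x y a b.
Proof.
move=> *; apply: mule_ge0; [by rewrite lee_fin mulr_ge0 // indicE | exact: acc_ge0].
Qed.

Lemma decomp n A B : measurable A -> measurable B ->
  \int[mu]_(x in A) ((pi x)%:E * mh_kernel mu nu P pi n x B) =
  \int[mu]_x Q n (fun y a b => (\1_A x * pi x)%R%:E * acc B x y a b) x 1 1
  + \int[mu]_x ((\1_A x * pi x * \1_B x)%R%:E * Q n (rej1 x) x 1 1).
Proof.
move=> mA mB.
have mH := macc_fam A B mA mB.
have mQH := Q_meas n mH (gH0 A B).
have mQR := Q_meas n mrej_fam rej1_ge0.
have m1 : measurable_fun setT (fun x => Q n (fun y a b => (\1_A x * pi x)%R%:E * acc B x y a b) x 1 1).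
  apply: (mQ_comp (H := fun u => Q n (fun y a b => (\1_A u * pi u)%R%:E * acc B u y a b)) mQH); mp.
have m2 : measurable_fun setT (fun x => (\1_A x * pi x * \1_B x)%R%:E * Q n (rej1 x) x 1 1).
  apply: emeasurable_funM.
    apply/measurable_EFinP; apply: measurable_funM; last by apply: (mind mB); mp.
    by apply: measurable_funM => //; apply: (mind mA); mp.
  apply: (mQ_comp (H := fun u => Q n (rej1 u)) mQR); mp.
rewrite -(ge0_integralD _ measurableT (f1 := fun x => Q n (fun y a b => (\1_A x * pi x)%R%:E * acc B x y a b) x 1 1) (f2 := fun x => (\1_A x * pi x * \1_B x)%R%:E * Q n (rej1 x) x 1 1)); last 4 first.
- by move=> x _; apply: Q_ge0 => *; apply: gH0.
- exact: m1.
- move=> x _; apply: mule_ge0; last by apply: Q_ge0 => *; apply: rej1_ge0.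
  by rewrite lee_fin !mulr_ge0 // indicE.
- exact: m2.
rewrite [LHS]integral_mkcond; apply: eq_integral => x _; rewrite patchE (K_eq n B x mB).
case: ifPn => xA.
  have -> : (\1_A x : R) = 1%R by rewrite indicE xA.
  rewrite !mul1r (QZ n (acc B x) (pi x) (macc B x mB) (@acc_ge0 B x) (pi0 x)).
  rewrite ge0_muleDr; first by rewrite muleA -EFinM.
    by apply: Q_ge0 => *; exact: acc_ge0.
  apply: mule_ge0; first by rewrite lee_fin indicE.
  by apply: Q_ge0 => *; exact: rej1_ge0.
have -> : (\1_A x : R) = 0%R by rewrite indicE (negbTE xA).
rewrite !mul0r (QZ n (acc B x) 0%R (macc B x mB) (@acc_ge0 B x) (lexx _)).
by rewrite !mul0e adde0.
Qed.

Lemma S_sym n A B : measurable A -> measurable B ->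
  \int[mu]_x Q n (fun y a b => (\1_A x * pi x)%R%:E * acc B x y a b) x 1 1 =
  \int[mu]_x Q n (fun y a b => (\1_B x * pi x)%R%:E * acc A x y a b) x 1 1.
Proof.
move=> mA mB.
rewrite (Q_rev n (fun x y a b => (\1_A x * pi x)%R%:E * acc B x y a b) (macc_fam A B mA mB) (gH0 A B)).
apply: eq_integral => y _.
apply: (Q_ext n _ _ _ y 1%R 1%R ler01 ler01) => x a b a0 b0 /=.
rewrite /acc /tau' -!EFinM; congr EFin.
rewrite !ger0_norm //.
transitivity (\1_A x * \1_B y * (pi x * b * mh_tau pi x y (Num.max (a / b) 0)))%R; first by ring.
rewrite /mh_tau key //.
by ring.
Qed.

Lemma detailed n A B : measurable A -> measurable B ->
  \int[mu]_(x in A) ((pi x)%:E * mh_kernel mu nu P pi n x B) =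
  \int[mu]_(x in B) ((pi x)%:E * mh_kernel mu nu P pi n x A).
Proof.
move=> mA mB.
rewrite (decomp n A B mA mB) (decomp n B A mB mA) (S_sym n A B mA mB).
congr (_ + _); apply: eq_integral => x _; congr (_ * _); congr EFin; ring.
Qed.
End S.

Lemma path_int_one (R : realType) (d1 d2 : measure_display)
  (Omega : measurableType d1) (Z : measurableType d2)
  (mu : {measure set Omega -> \bar R}) (nu : probability Z R)
  (P : Omega -> Omega -> Z -> R) :
  (forall x z, \int[mu]_y (P x y z)%:E = 1) ->
  forall n x r, path_int mu nu P n (fun _ _ => 1) x r = 1.
Proof.
move=> Pint; elim=> [|n IH] x r //=.
transitivity (\int[nu]_z (cst (1 : \bar R) z)).
  apply: eq_integral => z _.
  transitivity (\int[mu]_y (P x y z)%:E); last exact: Pint.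
  by apply: eq_integral => y _; rewrite IH mule1.
by rewrite integral_cst // mul1e; apply: probability_setT.
Qed.

Theorem mainTheorem3 (R : realType) (d1 d2 : measure_display)
  (Omega : measurableType d1) (Z : measurableType d2)
  (mu : {measure set Omega -> \bar R}) (nu : probability Z R)
  (pi : Omega -> R) (P : Omega -> Omega -> Z -> R) (T : nat) :
  sigma_finite setT mu ->
  measurable_fun setT pi ->
  (forall x, (0 <= pi x)%R) ->
  \int[mu]_x (pi x)%:E = 1 ->
  measurable_fun setT (fun p : Omega * Omega * Z => P p.1.1 p.1.2 p.2) ->
  (forall x y z, (0 <= P x y z)%R) ->
  (forall x z, \int[mu]_y (P x y z)%:E = 1) ->
  (1 <= T)%N ->
  (forall A B : set Omega, measurable A -> measurable B ->
     \int[mu]_(x in A) ((pi x)%:E * mh_kernel mu nu P pi T x B)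
     = \int[mu]_(x in B) ((pi x)%:E * mh_kernel mu nu P pi T x A)) /\
  (forall B : set Omega, measurable B ->
     \int[mu]_x ((pi x)%:E * mh_kernel mu nu P pi T x B)
     = \int[mu]_(x in B) (pi x)%:E).
Proof.
move=> smu mpi pi0 pi1 mP P0 Pint T1.
pose mu' := @mkSF R d1 Omega mu smu.
have DB : forall A B : set Omega, measurable A -> measurable B ->
     \int[mu]_(x in A) ((pi x)%:E * mh_kernel mu nu P pi T x B)
     = \int[mu]_(x in B) ((pi x)%:E * mh_kernel mu nu P pi T x A).
  move=> A B mA mB.
  exact: (@detailed R d1 d2 Omega Z mu' nu P mP P0 pi mpi pi0 T A B mA mB).
split => // B mB.
rewrite (DB setT B measurableT mB).
apply: eq_integral => x _.
rewrite /mh_kernel.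
have -> : (fun y r => (mh_tau pi x y r * \1_[set: Omega] y + (1 - mh_tau pi x y r) * \1_[set: Omega] x)%R%:E) = (fun _ _ => 1).
  apply/funext => y; apply/funext => r.
  by rewrite indicT /= !mulr1 addrC subrK.
by rewrite path_int_one // mule1.
Qed.
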